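(* Let $V_\theta$ be a real vector space of dimension $2$ and let $M\subset V_\theta\times[0,1]$ be a dichotomous item response hypersurface with associated function $f:V_\theta\to[0,1]$. Then for every $w\in V_\theta$ there exists a nonzero $v\in V_\theta$ such that $f$ is constant on the line $w+\mathbb{R}\cdot v=\{w+\lambda v:\lambda\in\mathbb{R}\}$.
   Context: A dichotomous item response hypersurface (IRHS) is a $D=\dim V_\theta$ dimensional smooth submanifold $M$ of $V_\theta\times[0,1]$ such that for any two vectors $v,w\in V_\theta$, the intersection of $(w+\mathbb{R}\cdot v)\times[0,1]$ with $M$ is the graph of a monotonic function $w+\mathbb{R}\cdot v\to[0,1]$. A function $g:w+\mathbb{R}\cdot v\to[0,1]$ is monotonic if either $g(w+\lambda v)\le g(w+\mu v)$ for all $\lambda\le\mu$, or $g(w+\lambda v)\ge g(w+\mu v)$ for all $\lambda\le\mu$. Taking $v=0$ shows $M$ is the graph of a function $f:V_\theta\to[0,1]$, the associated function. *)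

(* Defs.v *)
From HB Require Import structures.
From mathcomp Require Import all_boot all_order all_algebra.
From mathcomp Require Import all_classical all_reals all_analysis.
Set Implicit Arguments. Unset Strict Implicit. Unset Printing Implicit Defensive.
Import Order.TTheory GRing.Theory Num.Theory.
Import numFieldNormedType.Exports.
Local Open Scope classical_set_scope.
Local Open Scope ring_scope.

Section IRHS.
Variable R : realType.

Fixpoint iter_dir (n : nat) (vs : seq 'rV[R]_n) (f : 'rV[R]_n -> R) : 'rV[R]_n -> R :=
  match vs with
  | [::] => f
  | v :: vs' => fun x => derive (iter_dir vs' f) x v
  end.

Definition smooth_fun (n : nat) (f : 'rV[R]_n -> R) : Prop :=
  forall vs : seq 'rV[R]_n,
    continuous (iter_dir vs f) /\ (forall x v, derivable (iter_dir vs f) x v).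

(* Smooth embedded hypersurface (dimension n) of R^(n+1), via the standard
   local-graph description: near each of its points, M is the graph of a
   smooth function of n of the coordinates. *)
Definition smooth_hypersurface (n : nat) (M : set 'rV[R]_n.+1) : Prop :=
  forall p, M p ->
    exists U : set 'rV[R]_n.+1, open U /\ U p /\
    exists (i : 'I_n.+1) (g : 'rV[R]_n -> R), smooth_fun g /\
      forall q, U q -> (M q <-> q 0 i = g (col' i q)).

(* identification of V_theta x R = R^2 x R with R^3 *)
Definition lift3 (x : 'rV[R]_2) (t : R) : 'rV[R]_3 :=
  \row_(i < 3) (if (i < 2)%N then x 0 (inord i) else t).

Definition monotonic_on_line (h : 'rV[R]_2 -> R) (w v : 'rV[R]_2) : Prop :=
  (forall l m : R, l <= m -> h (w + l *: v) <= h (w + m *: v)) \/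
  (forall l m : R, l <= m -> h (w + m *: v) <= h (w + l *: v)).

Definition IRHS (M : set ('rV[R]_2 * R)) : Prop :=
  (forall x t, M (x, t) -> 0 <= t <= 1) /\
  smooth_hypersurface [set lift3 p.1 p.2 | p in M] /\
  forall v w : 'rV[R]_2,
    exists h : 'rV[R]_2 -> R,
      (forall l : R, 0 <= h (w + l *: v) <= 1) /\
      monotonic_on_line h w v /\
      (forall x t, ((exists l : R, x = w + l *: v) /\ 0 <= t <= 1 /\ M (x, t)) <->
                   ((exists l : R, x = w + l *: v) /\ t = h x)).

Definition associated_function (M : set ('rV[R]_2 * R)) (f : 'rV[R]_2 -> R) : Prop :=
  forall x t, M (x, t) <-> t = f x.

End IRHS.

(* Main.v *)
Require Import Defs.
From HB Require Import structures.
From mathcomp Require Import all_boot all_order all_algebra.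
From mathcomp Require Import all_classical all_reals all_analysis.
From mathcomp Require Import ring lra.
Import Order.TTheory GRing.Theory Num.Theory.
Import numFieldNormedType.Exports.
Local Open Scope classical_set_scope.
Local Open Scope ring_scope.
Set Implicit Arguments. Unset Strict Implicit.

Lemma cont_eps (R : realType) (n : nat) (g : 'rV[R]_n -> R) :
  continuous g -> forall (z : 'rV[R]_n) (e : R), 0 < e -> exists2 d : R, 0 < d &
    forall z' : 'rV[R]_n, (forall k, `|z 0 k - z' 0 k| < d) -> `|g z - g z'| < e.
Proof.
move=> gc z e e0; have := gc z; move/cvgrPdist_lt/(_ e e0).
move/nbhs_ballP => [d d0 H]; exists d => // z' Hz; apply: H.
by split => // i j; rewrite ord1 /ball /=; exact: Hz.
Qed.

Lemma open_box (R : realType) (n : nat) (U : set 'rV[R]_n) p :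
  open U -> U p -> exists2 e : R, 0 < e &
    forall q : 'rV[R]_n, (forall k, `|p 0 k - q 0 k| < e) -> U q.
Proof.
move=> oU Up; have : nbhs p U by apply: open_nbhs_nbhs; split.
move/nbhs_ballP => [e e0 H]; exists e => // q Hq; apply: H.
by split => // i j; rewrite ord1 /ball /=; exact: Hq.
Qed.

Lemma eps_cont (R : realType) (phi : R -> R) :
  (forall t e, 0 < e -> exists2 d, 0 < d & forall t', `|t - t'| < d -> `|phi t - phi t'| < e) ->
  continuous phi.
Proof.
move=> H t; apply/cvgrPdist_lt => e e0; have [d d0 Hd] := H t e e0.
by apply/nbhs_ballP; exists d => // t' Ht'; apply: Hd.
Qed.

Lemma ivt0 (R : realType) (phi : R -> R) a b :
  a <= b -> continuous phi -> phi a * phi b <= 0 ->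
  exists2 c, a <= c <= b & phi c = 0.
Proof.
move=> ab pc pab.
have [c cab pc0] : exists2 c, c \in `[a, b] & phi c = 0.
  apply: IVT => //; first exact: continuous_subspaceT.
  case: (leP (phi a) (phi b)) => h; apply/andP; split; nra.
by exists c => //; move: cab; rewrite in_itv.
Qed.

Lemma lift3E (R : realType) (y : 'rV[R]_2) t (j : 'I_3) :
  lift3 y t 0 j = if (j < 2)%N then y 0 (inord j) else t.
Proof. by rewrite /lift3 mxE. Qed.

Lemma lift3_inj (R : realType) (y y' : 'rV[R]_2) t t' :
  lift3 y t = lift3 y' t' -> y = y' /\ t = t'.
Proof.
move=> E; split.
- apply/rowP => k; have := congr1 (fun q : 'rV[R]_3 => q 0 (widen_ord (leqnSn 2) k)) E.
  by rewrite /= !lift3E /= ltn_ord inord_val.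
- have := congr1 (fun q : 'rV[R]_3 => q 0 ord_max) E.
  by rewrite /= !lift3E.
Qed.

Lemma lift3_near (R : realType) (y y' : 'rV[R]_2) t t' d :
  (forall k, `|y 0 k - y' 0 k| < d) -> `|t - t'| < d ->
  forall j, `|lift3 y t 0 j - lift3 y' t' 0 j| < d.
Proof. by move=> Hy Ht j; rewrite !lift3E; case: ifP. Qed.

Lemma lift3_last (R : realType) (y : 'rV[R]_2) t t' (j : 'I_3) :
  (j != 2 :> nat) -> lift3 y t 0 j = lift3 y t' 0 j.
Proof.
move=> Hj; rewrite !lift3E; case: ifP => // /negbT; rewrite -leqNgt => H.
by move: Hj (ltn_ord j); rewrite neq_ltn ltnNge H /=; case: (nat_of_ord j) H => [|[|[|]]].
Qed.

Definition shift {R : realType} (x : 'rV[R]_2) (i : nat) (s : R) : 'rV[R]_2 :=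
  \row_k (x 0 k + (if (k : nat) == i then s else 0)).

Lemma lift3_shift (R : realType) (x : 'rV[R]_2) (i : 'I_3) s t (j : 'I_3) :
  (i < 2)%N -> lift3 (shift x i s) t 0 j = lift3 x t 0 j + (if j == i then s else 0).
Proof.
move=> Hi; rewrite !lift3E; case: ifP => Hj.
- by rewrite /shift mxE inordK.
- case: eqP => [E|_]; last by rewrite addr0.
  by rewrite E Hi in Hj.
Qed.

Lemma shift_near (R : realType) (x : 'rV[R]_2) (i : nat) s d :
  `|s| < d -> 0 < d -> forall k, `|x 0 k - shift x i s 0 k| < d.
Proof.
move=> Hs d0 k; rewrite /shift mxE; case: eqP => _.
- by rewrite opprD addrA subrr sub0r normrN.
- by rewrite addr0 subrr normr0.
Qed.

Lemma minle1 (R : realType) (x y : R) : Num.min x y <= x.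
Proof. by rewrite ge_min lexx. Qed.
Lemma minle2 (R : realType) (x y : R) : Num.min x y <= y.
Proof. by rewrite ge_min lexx orbT. Qed.

Lemma colE (R : realType) (A : 'rV[R]_3) (i : 'I_3) (k : 'I_2) :
  col' i A 0 k = A 0 (lift i k).
Proof. by rewrite mxE. Qed.

Lemma samesign (R : realType) (a u : R) : `|a - u| < `|a| -> 0 < a * u.
Proof.
case: (ltgtP a 0) => ha.
- by rewrite (ltr0_norm ha) ltr_norml => /andP[h1 h2]; nra.
- by rewrite (gtr0_norm ha) ltr_norml => /andP[h1 h2]; nra.
- by rewrite ha normr0 sub0r normrN ltNge normr_ge0.
Qed.

Lemma f_cont (R : realType) (M : set ('rV[R]_2 * R)) (f : 'rV[R]_2 -> R) :
  IRHS M -> associated_function M f ->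
  forall (x : 'rV[R]_2) (e : R), 0 < e -> exists2 d : R, 0 < d &
    forall y : 'rV[R]_2, (forall k, `|x 0 k - y 0 k| < d) -> `|f x - f y| < e.
Proof.
move=> [_ [SH _]] Haf x e e0.
have Sp : [set lift3 p.1 p.2 | p in M] (lift3 x (f x)).
  by exists (x, f x) => //; apply/Haf.
have [U [oU [Up [i [g [sg Hq]]]]]] := SH _ Sp.
have gc : continuous g := (sg [::]).1.
set t0 := f x in Up *.
pose G y t := lift3 y t 0 i - g (col' i (lift3 y t)).
have [eU eU0 HU] := open_box oU Up.
have HUb : forall (y : 'rV[R]_2) (t : R), (forall k, `|x 0 k - y 0 k| < eU) -> `|t0 - t| < eU ->
    U (lift3 y t).
  by move=> y t Hy Ht; apply: HU; apply: lift3_near.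
have Z : forall (y : 'rV[R]_2) (t : R), U (lift3 y t) -> (G y t = 0 <-> t = f y).
  move=> y t Uq; rewrite /G (rwP eqP) subr_eq0 -(rwP eqP) -(Hq _ Uq); split.
  - by case=> [[y' t'] /= Mp E]; case: (lift3_inj E) => <- <-; apply/Haf.
  - by move=> ->; exists (y, f y) => //; apply/Haf.
have Gc : forall (y : 'rV[R]_2) (t : R) (eps : R), 0 < eps -> exists2 d : R, 0 < d &
    forall (y' : 'rV[R]_2) (t' : R), (forall k, `|y 0 k - y' 0 k| < d) -> `|t - t'| < d ->
    `|G y t - G y' t'| < eps.
  move=> y t eps eps0.
  have eps2 : 0 < eps / 2 by rewrite divr_gt0.
  have [dg dg0 Hg] := cont_eps gc (col' i (lift3 y t)) eps2.
  exists (Num.min dg (eps / 2)); first by rewrite lt_min dg0 eps2.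
  move=> y' t' Hy Ht.
  have Hl := lift3_near Hy Ht.
  have h1 : `|lift3 y t 0 i - lift3 y' t' 0 i| < eps / 2.
    by apply: (lt_le_trans (Hl i)); rewrite ge_min lexx orbT.
  have h2 : `|g (col' i (lift3 y t)) - g (col' i (lift3 y' t'))| < eps / 2.
    apply: Hg => k; rewrite !colE; apply: (lt_le_trans (Hl _)).
    by rewrite ge_min lexx.
  rewrite /G.
  set A := lift3 y t 0 i; set A' := lift3 y' t' 0 i.
  set B := g _; set B' := g _.
  have -> : A - B - (A' - B') = (A - A') + (B' - B) by ring.
  apply: le_lt_trans (ler_normD _ _) _.
  rewrite (distrC B'); have -> : eps = eps / 2 + eps / 2 by field.
  exact: ltrD.
have Gt : forall (y : 'rV[R]_2), continuous (G y).
  move=> y; apply: eps_cont => t eps eps0.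
  have [d d0 Hd] := Gc y t eps eps0; exists d => // t' Ht'; apply: Hd => //.
  by move=> k; rewrite subrr normr0.
pose d0 := Num.min (eU / 2) (e / 2).
have d00 : 0 < d0 by rewrite lt_min !divr_gt0.
have d0U : d0 < eU.
  by apply: (le_lt_trans (minle1 _ _)); rewrite ltr_pdivrMr //; nra.
have d0e : d0 < e.
  by apply: (le_lt_trans (minle2 _ _)); rewrite ltr_pdivrMr //; nra.
have Gt0 : G x t0 = 0 by apply/(Z _ _ Up).
have xx : forall k, `|x 0 k - x 0 k| < eU by move=> k; rewrite subrr normr0.
have box : forall t, t0 - d0 <= t <= t0 + d0 -> `|t0 - t| < eU.
  move=> t /andP[h1 h2]; apply: le_lt_trans d0U.
  by rewrite ler_norml; apply/andP; split; lra.
have Hnz : forall t, t0 - d0 <= t <= t0 + d0 -> t != t0 -> G x t != 0.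
  move=> t Ht; apply: contra_neq => /(Z _ _ (HUb _ _ xx (box _ Ht))) ->.
  by [].
set a := G x (t0 - d0); set b := G x (t0 + d0).
have a0 : a != 0.
  by apply: Hnz; [apply/andP; split; lra | rewrite neq_lt; apply/orP; left; lra].
have b0 : b != 0.
  by apply: Hnz; [apply/andP; split; lra | rewrite neq_lt; apply/orP; right; lra].
have ab : a * b < 0.
  case: (boolP (i < 2)%N) => Hi.
  - have key : forall s, `|s| < eU -> (a + s) * s < 0 -> (b + s) * s < 0 -> False.
      move=> s Hs h1 h2.
      set ys := shift x i s.
      have GS : forall t, G ys t = G x t + s.
        move=> t; rewrite /G lift3_shift // eqxx.
        have -> : col' i (lift3 ys t) = col' i (lift3 x t).
          apply/rowP => k; rewrite !colE lift3_shift //.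
          by rewrite eq_sym (negbTE (neq_lift i k)) addr0.
        by ring.
      have Us : forall t, `|t0 - t| < eU -> U (lift3 ys t).
        by move=> t Ht; apply: HUb => //; apply: shift_near.
      have [t1 /andP[t1a t1b] Gt1] : exists2 t1, t0 - d0 <= t1 <= t0 & G ys t1 = 0.
        by apply: ivt0 => //; [lra | rewrite !GS -/a Gt0 add0r; nra].
      have [t2 /andP[t2a t2b] Gt2] : exists2 t2, t0 <= t2 <= t0 + d0 & G ys t2 = 0.
        by apply: ivt0 => //; [lra | rewrite !GS -/b Gt0 add0r; nra].
      have e1 : t1 = f ys.
        by apply/(Z _ _ (Us _ (box t1 _))) => //; apply/andP; split; lra.
      have e2 : t2 = f ys.
        by apply/(Z _ _ (Us _ (box t2 _))) => //; apply/andP; split; lra.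
      have et : t1 = t0 by lra.
      by move: Gt1; rewrite et GS Gt0 add0r => s0; rewrite s0 mulr0 ltxx in h2.
    case: (ltP (a * b) 0) => // hab; exfalso.
    have hab' : 0 < a * b by rewrite lt_def mulf_neq0.
    case: (ltP 0 a) => ha.
    + have hb : 0 < b by nra.
      set m := Num.min (Num.min a b) eU.
      have m1 : m <= a by apply: le_trans (minle1 _ _) (minle1 _ _).
      have m2 : m <= b by apply: le_trans (minle1 _ _) (minle2 _ _).
      have m3 : m <= eU by apply: minle2.
      have m0 : 0 < m by rewrite !lt_min ha hb eU0.
      apply: (key (- (m / 2))); last 2 first.
      * by nra.
      * by nra.
      by rewrite normrN gtr0_norm; lra.
    + have ha' : a < 0 by rewrite lt_def eq_sym a0.
      have hb : b < 0 by nra.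
      set m := Num.min (Num.min (- a) (- b)) eU.
      have m1 : m <= - a by apply: le_trans (minle1 _ _) (minle1 _ _).
      have m2 : m <= - b by apply: le_trans (minle1 _ _) (minle2 _ _).
      have m3 : m <= eU by apply: minle2.
      have m0 : 0 < m by rewrite !lt_min oppr_gt0 ha' oppr_gt0 hb eU0.
      apply: (key (m / 2)); last 2 first.
      * by nra.
      * by nra.
      by rewrite gtr0_norm; lra.
  - have i2 : (i : nat) = 2%N.
      by move: (ltn_ord i) Hi; case: (nat_of_ord i) => [|[|[|]]].
    have Gx : forall t, G x t = t - t0.
      move=> t.
      have E : forall t', col' i (lift3 x t') = col' i (lift3 x t0).
        move=> t'; apply/rowP => k; rewrite !colE; apply: lift3_last.
        apply/negP => /eqP Ek; have := neq_lift i k; rewrite eq_sym => /eqP; apply.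
        by apply: val_inj; move: Ek => /= ->.
      move: Gt0; rewrite /G !lift3E (negbTE Hi) E => /eqP; rewrite subr_eq0 => /eqP <-.
      by [].
    by rewrite /a /b !Gx; nra.
have [d1 d10 H1] := Gc x (t0 - d0) `|a| (ltac:(by rewrite normr_gt0)).
have [d2 d20 H2] := Gc x (t0 + d0) `|b| (ltac:(by rewrite normr_gt0)).
exists (Num.min eU (Num.min d1 d2)); first by rewrite !lt_min eU0 d10 d20.
move=> y Hy.
have Hy0 : forall k, `|x 0 k - y 0 k| < eU.
  by move=> k; apply: (lt_le_trans (Hy k)); apply: minle1.
have Hy1 : forall k, `|x 0 k - y 0 k| < d1.
  by move=> k; apply: (lt_le_trans (Hy k)); apply: le_trans (minle2 _ _) (minle1 _ _).
have Hy2 : forall k, `|x 0 k - y 0 k| < d2.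
  by move=> k; apply: (lt_le_trans (Hy k)); apply: le_trans (minle2 _ _) (minle2 _ _).
have ua : 0 < a * G y (t0 - d0) by apply: samesign; apply: H1 => //; rewrite subrr normr0.
have ub : 0 < b * G y (t0 + d0) by apply: samesign; apply: H2 => //; rewrite subrr normr0.
have uab : G y (t0 - d0) * G y (t0 + d0) <= 0 by nra.
have [t /andP[ta tb] Gy] := ivt0 (ltac:(lra) : t0 - d0 <= t0 + d0) (Gt y) uab.
have -> : f y = t.
  by apply/esym/(Z _ _ (HUb _ _ Hy0 (box _ _))) => //; apply/andP; split.
apply: le_lt_trans d0e; rewrite ler_norml; apply/andP; split; lra.
Qed.

Lemma R_conn (R : realType) (P Q : set R) : open P -> open Q ->
  (forall s, P s \/ Q s) -> (forall s, ~ (P s /\ Q s)) ->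
  (forall s, P s) \/ (forall s, Q s).
Proof.
move=> oP oQ PQ nPQ.
have cT : connected (@setT R) by apply/connected_intervalP => x y _ _ z _.
case: (pselect (exists s, P s)) => [[s0 Ps0]|nP]; last first.
  by right => s; case: (PQ s) => // Ps; exfalso; apply: nP; exists s.
left => s.
have EP : P = ~` Q.
  apply/seteqP; split => x /=.
  - by move=> Px Qx; apply: (nPQ x).
  - by case: (PQ x).
have : P = setT.
  apply: cT.
  - by exists s0.
  - by exists P => //; rewrite setTI.
  - by exists (~` Q); [apply: open_closedC | rewrite setTI].
by move=> ->.
Qed.

Lemma f_mono (R : realType) (M : set ('rV[R]_2 * R)) (f : 'rV[R]_2 -> R) :
  IRHS M -> associated_function M f -> forall w v : 'rV[R]_2,
  (forall l m : R, l <= m -> f (w + l *: v) <= f (w + m *: v)) \/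
  (forall l m : R, l <= m -> f (w + m *: v) <= f (w + l *: v)).
Proof.
move=> [_ [_ H]] Haf w v; have [h [hb [hm hg]]] := H v w.
have hf : forall l, h (w + l *: v) = f (w + l *: v).
  move=> l; have [_ [_ Mx]] := (hg (w + l *: v) (h (w + l *: v))).2 (conj (ex_intro _ l erefl) erefl).
  exact/Haf.
by case: hm => hm; [left|right] => l m lm; rewrite -!hf; apply: hm.
Qed.

Definition Pset {R : realType} (f : 'rV[R]_2 -> R) (w v : 'rV[R]_2) :=
  exists t : R, 0 < t * (f (w + t *: v) - f w).
Definition Qset {R : realType} (f : 'rV[R]_2 -> R) (w v : 'rV[R]_2) :=
  exists t : R, t * (f (w + t *: v) - f w) < 0.

Lemma notboth (R : realType) (M : set ('rV[R]_2 * R)) (f : 'rV[R]_2 -> R) :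
  IRHS M -> associated_function M f -> forall w v : 'rV[R]_2,
  ~ (Pset f w v /\ Qset f w v).
Proof.
move=> HI Haf w v [[t1 h1] [t2 h2]].
have E : w + 0 *: v = w by rewrite scale0r addr0.
case: (f_mono HI Haf w v) => hm.
- have : 0 <= t2 * (f (w + t2 *: v) - f w); last by lra.
  case: (leP 0 t2) => ht.
  + by have := hm _ _ ht; rewrite E; nra.
  + by have := hm _ _ (ltW ht); rewrite E; nra.
- have : t1 * (f (w + t1 *: v) - f w) <= 0; last by lra.
  case: (leP 0 t1) => ht.
  + by have := hm _ _ ht; rewrite E; nra.
  + by have := hm _ _ (ltW ht); rewrite E; nra.
Qed.

Lemma PorQ (R : realType) (f : 'rV[R]_2 -> R) (w v : 'rV[R]_2) :
  ~ (forall l : R, f (w + l *: v) = f w) -> Pset f w v \/ Qset f w v.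
Proof.
move=> nc; apply: contrapT => nPQ; apply: nc => l.
case: (ltgtP l 0) => hl.
- case: (ltgtP (f (w + l *: v)) (f w)) => // h; exfalso; apply: nPQ.
  + by left; exists l; nra.
  + by right; exists l; nra.
- case: (ltgtP (f (w + l *: v)) (f w)) => // h; exfalso; apply: nPQ.
  + by right; exists l; nra.
  + by left; exists l; nra.
- by rewrite hl scale0r addr0.
Qed.

Lemma stable (R : realType) (M : set ('rV[R]_2 * R)) (f : 'rV[R]_2 -> R) :
  IRHS M -> associated_function M f -> forall (w : 'rV[R]_2) (D : R -> 'rV[R]_2),
  (forall s s' k, `|D s 0 k - D s' 0 k| <= `|s - s'|) ->
  forall s t, f (w + t *: D s) - f w != 0 -> exists2 d : R, 0 < d &
  forall s', `|s - s'| < d ->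
    0 < (f (w + t *: D s) - f w) * (f (w + t *: D s') - f w).
Proof.
move=> HI Haf w D HD s t a0.
have [d d0 Hd] := f_cont HI Haf (w + t *: D s) (ltac:(by rewrite normr_gt0) : 0 < `|f (w + t *: D s) - f w|).
have t1 : 0 < `|t| + 1 by rewrite ltr_wpDl.
exists (d / (`|t| + 1)); first by rewrite divr_gt0.
move=> s' Hs; apply: samesign.
have -> : f (w + t *: D s) - f w - (f (w + t *: D s') - f w) =
          f (w + t *: D s) - f (w + t *: D s') by ring.
apply: Hd => k; rewrite !mxE.
have -> : w 0 k + t * D s 0 k - (w 0 k + t * D s' 0 k) = t * (D s 0 k - D s' 0 k) by ring.
rewrite normrM.
move: Hs; rewrite ltr_pdivlMr // => Hs.
have := HD s s' k; have := normr_ge0 t; have := normr_ge0 (D s 0 k - D s' 0 k).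
by nra.
Qed.

Lemma sgn3 (R : realType) (t a b : R) : 0 < t * a -> 0 < a * b -> 0 < t * b.
Proof.
case: (ltgtP a 0) => ha h1 h2.
- have hb : b < 0 by nra.
  have ht : t < 0 by nra.
  nra.
- have hb : 0 < b by nra.
  have ht : 0 < t by nra.
  nra.
- by rewrite ha mulr0 ltxx in h1.
Qed.

Lemma sgn3' (R : realType) (t a b : R) : t * a < 0 -> 0 < a * b -> t * b < 0.
Proof.
move=> h1 h2; have := @sgn3 R (- t) a b; rewrite !mulNr !oppr_gt0; exact.
Qed.

Lemma PQopen (R : realType) (M : set ('rV[R]_2 * R)) (f : 'rV[R]_2 -> R) :
  IRHS M -> associated_function M f -> forall (w : 'rV[R]_2) (D : R -> 'rV[R]_2),
  (forall s s' k, `|D s 0 k - D s' 0 k| <= `|s - s'|) ->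
  open [set s | Pset f w (D s)] /\ open [set s | Qset f w (D s)].
Proof.
move=> HI Haf w D HD; split; rewrite openE => s [t ht]; apply/nbhs_ballP.
- have a0 : f (w + t *: D s) - f w != 0 by apply/eqP => E; rewrite E mulr0 ltxx in ht.
  have [d d0 Hd] := stable HI Haf HD a0.
  by exists d => // s' Hs'; exists t; apply: sgn3 ht (Hd s' Hs').
- have a0 : f (w + t *: D s) - f w != 0 by apply/eqP => E; rewrite E mulr0 ltxx in ht.
  have [d d0 Hd] := stable HI Haf HD a0.
  by exists d => // s' Hs'; exists t; apply: sgn3' ht (Hd s' Hs').
Qed.

Lemma flipP (R : realType) (f : 'rV[R]_2 -> R) (w v : 'rV[R]_2) :
  Pset f w (- v) -> Qset f w v.
Proof.
case=> t h; exists (- t); move: h.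
by rewrite scalerN -scaleNr mulNr oppr_lt0.
Qed.

Lemma flipQ (R : realType) (f : 'rV[R]_2 -> R) (w v : 'rV[R]_2) :
  Qset f w (- v) -> Pset f w v.
Proof.
case=> t h; exists (- t); move: h.
by rewrite scalerN -scaleNr mulNr oppr_gt0.
Qed.

Unset Implicit Arguments.

Theorem lemma2 (R : realType) (M : set ('rV[R]_2 * R)) (f : 'rV[R]_2 -> R) :
  IRHS M -> associated_function M f ->
  forall w : 'rV[R]_2, exists v : 'rV[R]_2,
    v != 0 /\ (forall l : R, f (w + l *: v) = f w).
Proof.
move=> HI Haf w.
apply: contrapT => nex.
have nc : forall v : 'rV[R]_2, v != 0 -> Pset f w v \/ Qset f w v.
  by move=> v v0; apply: PorQ => hc; apply: nex; exists v; split.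
pose d := fun s : R => \row_(k < 2) (if (k : nat) == 0%N then 1 else s).
pose e := fun s : R => \row_(k < 2) (if (k : nat) == 0%N then s else 1).
have dL : forall s s' k, `|d s 0 k - d s' 0 k| <= `|s - s'|.
  by move=> s s' k; rewrite !mxE; case: ifP => _; rewrite ?subrr ?normr0 ?normr_ge0.
have eL : forall s s' k, `|e s 0 k - e s' 0 k| <= `|s - s'|.
  by move=> s s' k; rewrite !mxE; case: ifP => _; rewrite ?subrr ?normr0 ?normr_ge0.
have dnz : forall s, d s != 0.
  by move=> s; apply/eqP => /rowP /(_ ord0); rewrite !mxE /= => /eqP; rewrite oner_eq0.
have enz : forall s, e s != 0.
  by move=> s; apply/eqP => /rowP /(_ ord_max); rewrite !mxE /= => /eqP; rewrite oner_eq0.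
have [oPd oQd] := PQopen HI Haf w dL.
have [oPe oQe] := PQopen HI Haf w eL.
have [Pd|Qd] := R_conn oPd oQd (fun s => nc _ (dnz s)) (fun s => @notboth _ _ _ HI Haf w (d s));
have [Pe|Qe] := R_conn oPe oQe (fun s => nc _ (enz s)) (fun s => @notboth _ _ _ HI Haf w (e s)).
- have E : d (-1) = - e (-1).
    by apply/rowP => k; rewrite !mxE; case: ifP => _; rewrite ?opprK.
  apply: (@notboth _ _ _ HI Haf w (e (-1))); split; first exact: Pe.
  by apply: flipP; rewrite -E; exact: Pd.
- have E : d 1 = e 1 by apply/rowP => k; rewrite !mxE; case: ifP.
  apply: (@notboth _ _ _ HI Haf w (e 1)); split; last exact: Qe.
  by rewrite -E; exact: Pd.
- have E : d 1 = e 1 by apply/rowP => k; rewrite !mxE; case: ifP.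
  apply: (@notboth _ _ _ HI Haf w (e 1)); split; first exact: Pe.
  by rewrite -E; exact: Qd.
- have E : d (-1) = - e (-1).
    by apply/rowP => k; rewrite !mxE; case: ifP => _; rewrite ?opprK.
  apply: (@notboth _ _ _ HI Haf w (e (-1))); split; last exact: Qe.
  by apply: flipQ; rewrite -E; exact: Qd.
Qed.
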